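(* Let $X$ be a vector lattice and let $l : X \to \mathbb{R}$ be an order bounded linear functional. Then $\ker(l)$ is a Grothendieck subspace of $X$ if and only if the modulus $|l|$ of $l$ is the sum of some pair of Riesz homomorphisms $X \to \mathbb{R}$.
   Context: The modulus of an order bounded functional $l$ is $|l| = l \vee (-l)$ in the Riesz space of order bounded functionals. A Riesz homomorphism is a linear functional preserving finite lattice operations. A linear subspace $H$ of a vector lattice is called a Grothendieck subspace (or $G$-space) if for all $x, y \in H$ one has $x \vee y \vee 0 + x \wedge y \wedge 0 \in H$. *)

(* Defs.v *)
From HB Require Import structures.
From mathcomp Require Import all_boot all_order all_algebra.
From mathcomp Require Import reals.
Set Implicit Arguments. Unset Strict Implicit. Unset Printing Implicit Defensive.
Import Order.TTheory GRing.Theory Num.Theory.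
Local Open Scope ring_scope.

Record vector_lattice (R : realType) (X : lmodType R) := VectorLattice {
  vle : X -> X -> Prop;
  vjoin : X -> X -> X;
  vmeet : X -> X -> X;
  vle_refl : forall x, vle x x;
  vle_trans : forall x y z, vle x y -> vle y z -> vle x z;
  vle_anti : forall x y, vle x y -> vle y x -> x = y;
  vle_add : forall x y z, vle x y -> vle (x + z) (y + z);
  vle_scale : forall (a : R) x y, 0 <= a -> vle x y -> vle (a *: x) (a *: y);
  vjoin_ubl : forall x y, vle x (vjoin x y);
  vjoin_ubr : forall x y, vle y (vjoin x y);
  vjoin_least : forall x y z, vle x z -> vle y z -> vle (vjoin x y) z;
  vmeet_lbl : forall x y, vle (vmeet x y) x;
  vmeet_lbr : forall x y, vle (vmeet x y) y;
  vmeet_greatest : forall x y z, vle z x -> vle z y -> vle z (vmeet x y)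
}.

Section Defs.
Variables (R : realType) (X : lmodType R) (L : vector_lattice X).

Definition lin_functional (f : X -> R) : Prop :=
  forall (a : R) (x y : X), f (a *: x + y) = a * f x + f y.

Definition order_bounded (f : X -> R) : Prop :=
  forall x y : X, exists M : R,
    forall z, vle L x z -> vle L z y -> `|f z| <= M.

Definition order_bounded_functional (f : X -> R) : Prop :=
  lin_functional f /\ order_bounded f.

(* the (canonical) order of the space of order bounded functionals:
   f <= g iff g - f is positive *)
Definition func_le (f g : X -> R) : Prop :=
  forall x, vle L 0 x -> f x <= g x.

(* m is the modulus |l| = l \/ (-l), i.e. the supremum of l and -l in the
   ordered vector space of order bounded functionals *)
Definition is_modulus (l m : X -> R) : Prop :=
  [/\ order_bounded_functional m,
      func_le l m, func_le (fun x => - l x) m &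
      forall g, order_bounded_functional g -> func_le l g ->
        func_le (fun x => - l x) g -> func_le m g].

Definition riesz_hom (f : X -> R) : Prop :=
  [/\ lin_functional f,
      forall x y, f (vjoin L x y) = Num.max (f x) (f y) &
      forall x y, f (vmeet L x y) = Num.min (f x) (f y)].

Definition G_space (H : X -> Prop) : Prop :=
  [/\ H 0,
      (forall (a : R) x y, H x -> H y -> H (a *: x + y)) &
      forall x y, H x -> H y ->
        H (vjoin L (vjoin L x y) 0 + vmeet L (vmeet L x y) 0)].

Definition kernel (f : X -> R) : X -> Prop := fun x => f x = 0.

End Defs.

(* Main.v *)
Require Import Defs.
From mathcomp Require Import all_boot all_order all_algebra reals.
From mathcomp Require Import classical_sets.
From mathcomp Require Import ring lra.
From Stdlib Require Import Classical.
Import Order.TTheory GRing.Theory Num.Theory.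
Local Open Scope ring_scope.


Section Lat.
Context {R : realType} {X : lmodType R} (L : vector_lattice X).
Local Notation "x <=: y" := (vle L x y) (at level 70).
Local Notation jn := (vjoin L).
Local Notation mt := (vmeet L).

Lemma lrefl x : x <=: x. Proof. exact: vle_refl. Qed.
Lemma ltr {x y z} : x <=: y -> y <=: z -> x <=: z. Proof. exact: vle_trans. Qed.
Lemma lanti {x y} : x <=: y -> y <=: x -> x = y. Proof. exact: vle_anti. Qed.

Lemma laddr {x y} z : x <=: y -> x + z <=: y + z. Proof. exact: vle_add. Qed.
Lemma laddl {x y} z : x <=: y -> z + x <=: z + y.
Proof. by move=> h; rewrite ![z + _]addrC; apply: laddr. Qed.
Lemma ladd {x y z w} : x <=: y -> z <=: w -> x + z <=: y + w.
Proof. by move=> h1 h2; apply: (ltr (laddr z h1)); apply: laddl. Qed.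
Lemma lsub0 {x y} : x <=: y -> 0 <=: y - x.
Proof. by move=> h; have := laddr (- x) h; rewrite subrr. Qed.
Lemma lsub0' {x y} : 0 <=: y - x -> x <=: y.
Proof. by move=> h; have := laddr x h; rewrite add0r subrK. Qed.
Lemma lopp {x y} : x <=: y -> - y <=: - x.
Proof.
move=> h; have := laddr (- x - y) h.
by rewrite addrA subrr add0r addrCA subrr addr0.
Qed.
Lemma lopp' {x y} : - y <=: - x -> x <=: y.
Proof. by move/lopp; rewrite !opprK. Qed.
Lemma lscale {a : R} {x y} : 0 <= a -> x <=: y -> a *: x <=: a *: y.
Proof. exact: vle_scale. Qed.
Lemma lscale0 {a : R} {x} : 0 <= a -> 0 <=: x -> 0 <=: a *: x.
Proof. by move=> ha hx; have := lscale ha hx; rewrite scaler0. Qed.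
Lemma lscale_le {a b : R} {x} : a <= b -> 0 <=: x -> a *: x <=: b *: x.
Proof.
move=> hab hx; apply: lsub0'; rewrite -scalerBl; apply: lscale0 => //.
by rewrite subr_ge0.
Qed.

Lemma jl x y : x <=: jn x y. Proof. exact: vjoin_ubl. Qed.
Lemma jr x y : y <=: jn x y. Proof. exact: vjoin_ubr. Qed.
Lemma jleast {x y z} : x <=: z -> y <=: z -> jn x y <=: z. Proof. exact: vjoin_least. Qed.
Lemma ml x y : mt x y <=: x. Proof. exact: vmeet_lbl. Qed.
Lemma mr x y : mt x y <=: y. Proof. exact: vmeet_lbr. Qed.
Lemma mgreat {x y z} : z <=: x -> z <=: y -> z <=: mt x y. Proof. exact: vmeet_greatest. Qed.

Lemma vjoinC x y : jn x y = jn y x.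
Proof. by apply: lanti; apply: jleast; [apply: jr|apply: jl|apply: jr|apply: jl]. Qed.
Lemma vmeetC x y : mt x y = mt y x.
Proof. by apply: lanti; apply: mgreat; [apply: mr|apply: ml|apply: mr|apply: ml]. Qed.
Lemma vjoin_r x y : x <=: y -> jn x y = y.
Proof. by move=> h; apply: lanti; [apply: jleast=> //; apply: lrefl|apply: jr]. Qed.
Lemma vjoin_l x y : y <=: x -> jn x y = x.
Proof. by move=> h; rewrite vjoinC vjoin_r. Qed.
Lemma vmeet_l x y : x <=: y -> mt x y = x.
Proof. by move=> h; apply: lanti; [apply: ml|apply: mgreat=> //; apply: lrefl]. Qed.
Lemma vmeet_r x y : y <=: x -> mt x y = y.
Proof. by move=> h; rewrite vmeetC vmeet_l. Qed.
Lemma vjoin_mono {x y x' y'} : x <=: x' -> y <=: y' -> jn x y <=: jn x' y'.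
Proof. by move=> h1 h2; apply: jleast; [apply: ltr h1 (jl _ _)|apply: ltr h2 (jr _ _)]. Qed.
Lemma vmeet_mono {x y x' y'} : x <=: x' -> y <=: y' -> mt x y <=: mt x' y'.
Proof. by move=> h1 h2; apply: mgreat; [apply: ltr (ml _ _) h1|apply: ltr (mr _ _) h2]. Qed.

Lemma vjoinD x y z : jn (x + z) (y + z) = jn x y + z.
Proof.
apply: lanti.
  by apply: jleast; apply: laddr; [apply: jl|apply: jr].
have h : jn x y <=: jn (x + z) (y + z) - z.
  apply: jleast.
    by have := laddr (- z) (jl (x + z) (y + z)); rewrite addrK.
  by have := laddr (- z) (jr (x + z) (y + z)); rewrite addrK.
by have := laddr z h; rewrite subrK.
Qed.
Lemma vmeetD x y z : mt (x + z) (y + z) = mt x y + z.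
Proof.
apply: lanti; last first.
  by apply: mgreat; apply: laddr; [apply: ml|apply: mr].
have h : mt (x + z) (y + z) - z <=: mt x y.
  apply: mgreat.
    by have := laddr (- z) (ml (x + z) (y + z)); rewrite addrK.
  by have := laddr (- z) (mr (x + z) (y + z)); rewrite addrK.
by have := laddr z h; rewrite subrK.
Qed.
Lemma vjoinN x y : - jn x y = mt (- x) (- y).
Proof.
apply: lanti.
  by apply: mgreat; apply: lopp; [apply: jl|apply: jr].
apply: lopp'; rewrite opprK; apply: jleast; apply: lopp'; rewrite opprK.
  exact: ml.
exact: mr.
Qed.
Lemma vmeetN x y : - mt x y = jn (- x) (- y).
Proof. by rewrite -[x]opprK -[y]opprK -vjoinN !opprK. Qed.

Lemma vjoinZ (a : R) x y : 0 <= a -> a *: jn x y = jn (a *: x) (a *: y).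
Proof.
move=> ha; have [->|a0] := eqVneq a 0.
  by rewrite !scale0r vjoin_l //; apply: lrefl.
have hp : 0 < a by rewrite lt_def a0 ha.
apply: lanti; last by apply: jleast; apply: lscale=> //; [apply: jl|apply: jr].
have hi : 0 <= a^-1 by rewrite invr_ge0.
have h : jn x y <=: a^-1 *: jn (a *: x) (a *: y).
  apply: jleast.
    by have := lscale hi (jl (a *: x) (a *: y)); rewrite scalerA mulVf // scale1r.
  by have := lscale hi (jr (a *: x) (a *: y)); rewrite scalerA mulVf // scale1r.
by have := lscale ha h; rewrite scalerA mulfV // scale1r.
Qed.
Lemma vmeetZ (a : R) x y : 0 <= a -> a *: mt x y = mt (a *: x) (a *: y).
Proof.
move=> ha; apply: oppr_inj; rewrite -scalerN vmeetN vjoinZ // vmeetN !scalerN //.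
Qed.

Lemma vjoin_meet x y : jn x y + mt x y = x + y.
Proof.
have e1 : - x + (x + y) = y by rewrite addKr.
have e2 : - y + (x + y) = x by rewrite addrC addrK.
have h : jn x y = - mt x y + (x + y).
  by rewrite -{1}e1 -{1}e2 vjoinD vjoinC vmeetN.
by rewrite h addrC addrA subrr add0r.
Qed.


Local Notation pp x := (jn x 0).
Local Notation nn x := (jn (- x) 0).

Lemma pp_ge0 x : 0 <=: pp x. Proof. exact: jr. Qed.
Lemma nn_ge0 x : 0 <=: nn x. Proof. exact: jr. Qed.
Lemma nnE x : nn x = pp x - x.
Proof. by rewrite -vjoinD subrr add0r vjoinC. Qed.
Lemma pp_nn x : pp x - nn x = x.
Proof. by rewrite nnE opprB addrC addrNK. Qed.
Lemma pp_id x : 0 <=: x -> pp x = x.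
Proof. by move=> h; rewrite vjoin_l. Qed.
Lemma nn_id x : 0 <=: x -> nn x = 0.
Proof. by move=> h; rewrite vjoin_r //; have := lopp h; rewrite oppr0. Qed.
Lemma vmeet_ge0 a b : 0 <=: a -> 0 <=: b -> 0 <=: mt a b.
Proof. by move=> ha hb; apply: mgreat. Qed.
Lemma meet_pn x : mt (pp x) (nn x) = 0.
Proof.
have h := vjoin_meet (pp x) (nn x).
have e : jn (pp x) (nn x) = pp x + nn x.
  have t : forall P, jn P (P - x) = P + nn x.
    by move=> P; rewrite -{1}(add0r P) (addrC P (-x)) vjoinD vjoinC addrC.
  by rewrite {1}nnE t.
by move: h; rewrite e -{2}[pp x + nn x]addr0 => /addrI.
Qed.

Lemma meet_sub_le a b c : 0 <=: a -> 0 <=: b -> 0 <=: c ->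
  mt a (b + c) <=: mt a b + mt a c.
Proof.
move=> ha hb hc; set d := mt a (b + c).
suff h : d - mt a b <=: mt a c.
  by have := laddr (mt a b) h; rewrite subrK addrC.
apply: mgreat.
  apply: ltr (ml a (b + c)); apply: lsub0'.
  by rewrite opprB addrC subrK; apply: vmeet_ge0.
rewrite vmeetN addrC -vjoinD; apply: jleast.
  apply: ltr hc; apply: lsub0'; rewrite sub0r opprD opprK.
  by apply: lsub0; apply: ml.
apply: lsub0'; rewrite opprD opprK addrA (addrC c b).
by apply: lsub0; apply: mr.
Qed.

Lemma meet_disj_add x a b : 0 <=: x -> 0 <=: a -> 0 <=: b -> mt a b = 0 ->
  mt x (a + b) = mt x a + mt x b.
Proof.
move=> hx ha hb hab; apply: lanti.
  by apply: meet_sub_le.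
have e : mt (mt x a) (mt x b) = 0.
  apply: lanti; last by apply: vmeet_ge0; apply: vmeet_ge0.
  by rewrite -hab; apply: vmeet_mono; apply: mr.
rewrite -vjoin_meet e addr0; apply: jleast; apply: mgreat; try exact: ml.
  apply: ltr (mr x a) _; by have := laddl a hb; rewrite addr0.
apply: ltr (mr x b) _; by have := laddr b ha; rewrite add0r.
Qed.

Lemma pp_sub a b : pp (a - b) = a - mt a b.
Proof.
transitivity (jn (- b + a) (- a + a)); first by rewrite addNr addrC.
by rewrite vjoinD -vmeetN vmeetC addrC.
Qed.

Lemma meet_sub0 p q : mt p q = 0 -> mt (p - q) 0 = - q.
Proof.
move=> h; transitivity (mt (p + - q) (q + - q)); first by rewrite subrr.
by rewrite vmeetD h add0r.
Qed.

Lemma disjZ (c d : R) p q : 0 <= c -> 0 <= d -> 0 <=: p -> 0 <=: q -> mt p q = 0 ->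
  mt (c *: p) (d *: q) = 0.
Proof.
move=> hc hd hp hq h; apply: lanti; last by apply: vmeet_ge0; apply: lscale0.
have hk : 0 <= c + d by apply: addr_ge0.
apply: ltr (vmeet_mono (lscale_le (_ : c <= c + d) hp) (lscale_le (_ : d <= c + d) hq)) _.
- by rewrite lerDl.
- by rewrite lerDr.
by rewrite -vmeetZ // h scaler0; apply: lrefl.
Qed.

Lemma jn_subs p q r : jn (p - q) (p - r) = p - mt q r.
Proof. by rewrite !(addrC p) vjoinD -vmeetN. Qed.
Lemma mt_subs p q r : mt (p - q) (p - r) = p - jn q r.
Proof. by rewrite !(addrC p) vmeetD -vjoinN. Qed.

Lemma G1 p q r : 0 <=: p -> 0 <=: q -> 0 <=: r ->
  mt p q = 0 -> mt p r = 0 -> mt q r = 0 ->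
  jn (jn (p - q) (p - r)) 0 + mt (mt (p - q) (p - r)) 0 = p - q - r.
Proof.
move=> hp hq hr hpq hpr hqr.
rewrite jn_subs hqr subr0 (pp_id _ hp) mt_subs.
have -> : jn q r = q + r by rewrite -[RHS](vjoin_meet q r) hqr addr0.
have hpqr : mt p (q + r) = 0.
  apply: lanti; first by have := meet_sub_le p q r hp hq hr; rewrite hpq hpr addr0.
  by apply: vmeet_ge0 => //; have := ladd hq hr; rewrite addr0.
by rewrite meet_sub0 // opprD addrA.
Qed.

Lemma G2 p q r : 0 <=: p -> 0 <=: q -> 0 <=: r -> mt p q = 0 ->
  jn (jn (p - q) (p + r)) 0 + mt (mt (p - q) (p + r)) 0 = p - q + r.
Proof.
move=> hp hq hr hpq.
have h1 : p - q <=: p + r.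
  apply: ladd; first exact: lrefl.
  apply: ltr hr; have := lopp hq; rewrite oppr0 => h; apply: h.
rewrite (vjoin_r _ _ h1) (vmeet_l _ _ h1) pp_id; last first.
  by have := ladd hp hr; rewrite addr0.
by rewrite meet_sub0 // addrAC.
Qed.
End Lat.


Section Fun.
Context {R : realType} {X : lmodType R} (L : vector_lattice X).
Local Notation "x <=: y" := (vle L x y) (at level 70).
Local Notation jn := (vjoin L).
Local Notation mt := (vmeet L).
Local Notation pp x := (jn x 0).
Local Notation nn x := (jn (- x) 0).

Section Lin.
Variable f : X -> R.
Hypothesis hf : lin_functional f.
Lemma lf0 : f 0 = 0.
Proof.
have := hf 1 0 0; rewrite scaler0 addr0 mul1r => h.
by apply: (addrI (f 0)); rewrite addr0 -h.
Qed.
Lemma lfD x y : f (x + y) = f x + f y.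
Proof. by have := hf 1 x y; rewrite scale1r mul1r. Qed.
Lemma lfZ a x : f (a *: x) = a * f x.
Proof. by have := hf a x 0; rewrite addr0 lf0 addr0. Qed.
Lemma lfN x : f (- x) = - f x.
Proof. by rewrite -scaleN1r lfZ mulN1r. Qed.
Lemma lfB x y : f (x - y) = f x - f y.
Proof. by rewrite lfD lfN. Qed.
End Lin.

Definition posf (f : X -> R) := forall x, 0 <=: x -> 0 <= f x.

Lemma posf_mono f : lin_functional f -> posf f -> forall x y, x <=: y -> f x <= f y.
Proof.
move=> hl hp x y h; have := hp _ (lsub0 L h); rewrite lfB // subr_ge0; done.
Qed.

Lemma min_shift (a b : R) : Num.min (a - b) 0 + b = Num.min a b.
Proof.
have [hab|hab] := lerP a b.
  by rewrite !min_l ?subrK // subr_le0.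
by rewrite !min_r ?add0r // ?subr_ge0 ltW.
Qed.

Lemma riesz_of (f : X -> R) : lin_functional f -> posf f ->
  (forall a b, 0 <=: a -> 0 <=: b -> mt a b = 0 -> f a = 0 \/ f b = 0) ->
  riesz_hom L f.
Proof.
move=> hl hp hd.
have hz : forall z, f (mt z 0) = Num.min (f z) 0.
  move=> z.
  have e1 : mt z 0 = - nn z by rewrite -[mt z 0]opprK vmeetN oppr0.
  have e2 : f z = f (pp z) - f (nn z) by rewrite -lfB // pp_nn.
  rewrite e1 lfN // e2.
  have h1 := hp _ (pp_ge0 L z); have h2 := hp _ (nn_ge0 L z).
  case: (hd _ _ (pp_ge0 L z) (nn_ge0 L z) (meet_pn L z)) => ->.
    by rewrite sub0r min_l // oppr_le0.
  by rewrite oppr0 addr0 min_r.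
have hm : forall x y, f (mt x y) = Num.min (f x) (f y).
  move=> x y.
  have e : mt x y = mt (x - y) 0 + y by rewrite -vmeetD subrK add0r.
  by rewrite e lfD // hz lfB // min_shift.
split => //.
move=> x y.
have e : jn x y = x + y - mt x y by rewrite -(vjoin_meet L x y) addrK.
rewrite e lfB // lfD // hm.
have [hab|hab] := lerP (f x) (f y).
  by ring.
by ring.
Qed.

Lemma riesz0 : riesz_hom L (fun _ => 0).
Proof.
split.
- by move=> a x y; rewrite mulr0 addr0.
- by move=> x y; rewrite maxxx.
- by move=> x y; rewrite minxx.
Qed.

Lemma zmod4 (V : zmodType) (a b c d : V) : a - b + (c - d) = (- b + c) - (- a + d).
Proof. by rewrite opprD opprK (addrC (- b) c) addrACA [RHS]addrACA (addrC c a). Qed.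

Section Ext.
Variable s : X -> R.
Hypothesis s_add : forall a b, 0 <=: a -> 0 <=: b -> s (a + b) = s a + s b.
Hypothesis s_hom : forall (c : R) a, 0 <= c -> 0 <=: a -> s (c *: a) = c * s a.
Hypothesis s_pos : forall a, 0 <=: a -> 0 <= s a.

Definition ext x := s (pp x) - s (nn x).

Lemma s0 : s 0 = 0.
Proof. by have := s_hom 0 0 (lexx 0) (lrefl L 0); rewrite scale0r mul0r. Qed.

Lemma ext_pos a : 0 <=: a -> ext a = s a.
Proof. by move=> h; rewrite /ext pp_id // nn_id // s0 subr0. Qed.

Lemma ext_diff a b : 0 <=: a -> 0 <=: b -> ext (a - b) = s a - s b.
Proof.
move=> ha hb; rewrite /ext.
have e : pp (a - b) + b = a + nn (a - b).
  by rewrite -[pp (a - b)](subrK (nn (a - b))) pp_nn addrAC subrK.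
have := congr1 s e; rewrite !s_add //; try apply: pp_ge0; try apply: nn_ge0.
by move=> h; apply/eqP; rewrite subr_eq addrAC -h addrK.
Qed.

Lemma ge0_add a b : 0 <=: a -> 0 <=: b -> 0 <=: a + b.
Proof. by move=> ha hb; have := ladd L ha hb; rewrite addr0. Qed.

Lemma ext_lin : lin_functional ext.
Proof.
move=> c x y.
have ex := pp_nn L x; have ey := pp_nn L y.
have hpx := pp_ge0 L x; have hnx := nn_ge0 L x.
have hpy := pp_ge0 L y; have hny := nn_ge0 L y.
have [hc|hc] := lerP 0 c.
  have e : c *: x + y = (c *: pp x + pp y) - (c *: nn x + nn y).
    by rewrite -{1}ex -{1}ey scalerBr; rewrite opprD addrACA.
  rewrite e ext_diff; try by apply: ge0_add => //; apply: lscale0.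
  rewrite !s_add; try by [|apply: lscale0].
  rewrite !s_hom // /ext; ring.
have hc' : 0 <= - c by rewrite oppr_ge0 ltW.
have e : c *: x + y = ((- c) *: nn x + pp y) - ((- c) *: pp x + nn y).
  by rewrite -{1}ex -{1}ey scalerBr !scaleNr zmod4.
rewrite e ext_diff; try by apply: ge0_add => //; apply: lscale0.
rewrite !s_add; try by [|apply: lscale0].
rewrite !s_hom // /ext; ring.
Qed.

Lemma ext_posf : posf ext.
Proof. by move=> a h; rewrite ext_pos //; apply: s_pos. Qed.

Lemma ext_ob : order_bounded L ext.
Proof.
move=> x y; exists (`|ext x| + s (y - x)) => z hxz hzy.
have e : ext z = ext x + s (z - x).
  rewrite -(ext_pos (z - x)); last by apply: lsub0.
  by rewrite -(lfD _ ext_lin) (addrC x) subrK.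
have h1 : 0 <= s (z - x) by apply: s_pos; apply: lsub0.
have h2 : s (z - x) <= s (y - x).
  have -> : y - x = (z - x) + (y - z) by rewrite [RHS]addrC addrA subrK.
  rewrite (s_add (z - x) (y - z)) ?lerDl; try apply: s_pos; by apply: (lsub0 L).
rewrite e; apply: le_trans (ler_normD _ _) _; rewrite lerD2l ger0_norm //.
Qed.
End Ext.

End Fun.


Lemma sup_le_c {R : realType} (E : set R) c : (exists r, E r) ->
  (forall r, E r -> r <= c) -> sup E <= c.
Proof. by move=> [r Er] h; apply: ge_sup; [exists r|]. Qed.

Lemma le_sup_c {R : realType} (E : set R) r c : E r ->
  (forall r, E r -> r <= c) -> r <= sup E.
Proof. by move=> Er h; apply: ub_le_sup => //; exists c. Qed.

Section RK.
Context {R : realType} {X : lmodType R} (L : vector_lattice X).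
Local Notation "x <=: y" := (vle L x y) (at level 70).
Local Notation jn := (vjoin L).
Local Notation mt := (vmeet L).
Local Notation pp x := (jn x 0).
Local Notation nn x := (jn (- x) 0).

Lemma lin_comb (f g : X -> R) a b : lin_functional f -> lin_functional g ->
  lin_functional (fun x => a * f x + b * g x).
Proof. by move=> hf hg c x y; rewrite hf hg; ring. Qed.

Lemma ob_comb (f g : X -> R) a b : order_bounded L f -> order_bounded L g ->
  order_bounded L (fun x => a * f x + b * g x).
Proof.
move=> hf hg x y; have [M1 h1] := hf x y; have [M2 h2] := hg x y.
exists (`|a| * M1 + `|b| * M2) => z hxz hzy.
apply: le_trans (ler_normD _ _) _; rewrite !normrM.
by apply: lerD; apply: ler_wpM2l => //; [apply: h1|apply: h2].
Qed.

Variable l : X -> R.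
Hypothesis hl : order_bounded_functional L l.

Definition sigma x := sup (fun r => exists w, [/\ 0 <=: w, w <=: x & r = l w]).

Lemma sigma_ge x w : 0 <=: w -> w <=: x -> l w <= sigma x.
Proof.
move=> h0 h1; have [M hM] := hl.2 0 x.
apply: (@le_sup_c _ _ _ M); first by exists w.
move=> r [w' [h0' h1' ->]]; apply: le_trans (ler_norm _) _; exact: hM.
Qed.

Lemma sigma_le x c : 0 <=: x -> (forall w, 0 <=: w -> w <=: x -> l w <= c) -> sigma x <= c.
Proof.
move=> hx h; apply: sup_le_c; first by exists (l 0), 0; split=> //; apply: lrefl.
by move=> r [w [h0 h1 ->]]; apply: h.
Qed.

Lemma sigma_pos x : 0 <=: x -> 0 <= sigma x.
Proof. by move=> hx; rewrite -(lf0 _ hl.1); apply: sigma_ge => //; apply: lrefl. Qed.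

Lemma sigma_add a b : 0 <=: a -> 0 <=: b -> sigma (a + b) = sigma a + sigma b.
Proof.
move=> ha hb; have hab := ge0_add L a b ha hb.
apply/eqP; rewrite eq_le; apply/andP; split.
  apply: sigma_le => // w h0 h1.
  have e : w = mt w a + (w - mt w a) by rewrite addrC subrK.
  rewrite e (lfD _ hl.1); apply: lerD.
    by apply: sigma_ge; [apply: vmeet_ge0|apply: mr].
  apply: sigma_ge; first by apply: lsub0; apply: ml.
  rewrite -pp_sub; apply: jleast => //.
  have := laddr L (- a) h1; rewrite (addrC a b) addrK; done.
rewrite -lerBrDr; apply: sigma_le => // w1 h0 h1.
rewrite lerBrDr -lerBrDl; apply: sigma_le => // w2 h2 h3.
rewrite lerBrDl addrC -(lfD _ hl.1); apply: sigma_ge.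
  exact: ge0_add.
by rewrite addrC; apply: ladd.
Qed.

Lemma sigma_hom c a : 0 <= c -> 0 <=: a -> sigma (c *: a) = c * sigma a.
Proof.
move=> hc ha; have [->|c0] := eqVneq c 0.
  rewrite scale0r mul0r; apply/eqP; rewrite eq_le sigma_pos ?andbT; last exact: lrefl.
  apply: sigma_le; first exact: lrefl.
  by move=> w h0 h1; rewrite (lanti L h1 h0) (lf0 _ hl.1).
have cp : 0 < c by rewrite lt_def c0 hc.
have hi : 0 <= c^-1 by rewrite invr_ge0.
apply/eqP; rewrite eq_le; apply/andP; split.
  apply: sigma_le; first exact: lscale0.
  move=> w h0 h1.
  have -> : w = c *: (c^-1 *: w) by rewrite scalerA mulfV // scale1r.
  rewrite (lfZ _ hl.1) ler_pM2l //; apply: sigma_ge; first exact: lscale0.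
  by have := lscale L hi h1; rewrite scalerA mulVf // scale1r.
rewrite -ler_pdivlMl //; apply: sigma_le => // w h0 h1.
rewrite ler_pdivlMl // -(lfZ _ hl.1); apply: sigma_ge; first exact: lscale0.
exact: lscale.
Qed.

Lemma modulus_ge (m : X -> R) : is_modulus L l m -> forall x, 0 <=: x -> `|l x| <= m x.
Proof.
by case=> _ h1 h2 _ x hx; rewrite ler_norml; have := h2 x hx; have := h1 x hx; lra.
Qed.

Lemma modulus_null (m : X -> R) u : is_modulus L l m -> 0 <=: u ->
  (forall w, 0 <=: w -> w <=: u -> l w = 0) -> m u <= 0.
Proof.
move=> [hm1 hm2 hm3 hmin] hu hnull.
pose e := ext L sigma.
have hlin : lin_functional e by apply: ext_lin; (try exact: sigma_add); (try exact: sigma_hom); (try exact: sigma_pos).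
have hob : order_bounded L e by apply: ext_ob; (try exact: sigma_add); (try exact: sigma_hom); (try exact: sigma_pos).
have hepos : forall x, 0 <=: x -> e x = sigma x.
  by move=> x hx; apply: ext_pos => //; (try exact: sigma_add); (try exact: sigma_hom).
pose g := fun x => 2 * e x + (-1) * l x.
have hg : order_bounded_functional L g.
  split; first exact: lin_comb hlin hl.1.
  exact: ob_comb hob hl.2.
have := hmin g hg.
have h1 : func_le L l g.
  move=> x hx; rewrite /g hepos //.
  have := sigma_ge x x hx (lrefl L x); lra.
have h2 : func_le L (fun x => - l x) g.
  move=> x hx; rewrite /g hepos //.
  have := sigma_pos x hx; lra.
move=> /(_ h1 h2 u hu); rewrite /g hepos // (hnull u hu (lrefl L u)).
have : sigma u <= 0 by apply: sigma_le => // w h0 h1'; rewrite hnull.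
lra.
Qed.

End RK.

Section G.
Context {R : realType} {X : lmodType R} (L : vector_lattice X).
Local Notation "x <=: y" := (vle L x y) (at level 70).
Local Notation jn := (vjoin L).
Local Notation mt := (vmeet L).

Variable l : X -> R.
Hypothesis hlin : lin_functional l.
Hypothesis hG : G_space L (kernel l).

Lemma core p q r : 0 <=: p -> 0 <=: q -> 0 <=: r ->
  mt p q = 0 -> mt p r = 0 -> mt q r = 0 ->
  l q = l p -> (l r = l p \/ l r = - l p) -> l p <> 0 -> False.
Proof.
move=> hp hq hr hpq hpr hqr e1 e2 hnz; case: hG => _ _ h3.
have hx : kernel l (p - q) by rewrite /kernel (lfB _ hlin) e1 subrr.
case: e2 => e2.
  have hy : kernel l (p - r) by rewrite /kernel (lfB _ hlin) e2 subrr.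
  have := h3 _ _ hx hy; rewrite G1 // /kernel !(lfB _ hlin) e1 e2 => h.
  by apply: hnz; lra.
have hy : kernel l (p + r) by rewrite /kernel (lfD _ hlin) e2 subrr.
have := h3 _ _ hx hy; rewrite G2 // /kernel (lfD _ hlin) (lfB _ hlin) e1 e2 => h.
by apply: hnz; lra.
Qed.

Lemma sgn1 (x : R) : x != 0 -> `|x|^-1 * x = 1 \/ `|x|^-1 * x = -1.
Proof.
move=> h; have [hx|hx] := lerP 0 x.
  by left; rewrite ger0_norm // mulVf.
by right; rewrite ltr0_norm // invrN mulNr mulVf.
Qed.

Ltac solve_core t :=
  apply: t => //; (try lra); (try (by left; lra)); (try (by right; lra));
  (try (move=> ?; lra)).

Lemma key3 a b c : 0 <=: a -> 0 <=: b -> 0 <=: c ->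
    mt a b = 0 -> mt a c = 0 -> mt b c = 0 ->
    (l a = 1 \/ l a = -1) -> (l b = 1 \/ l b = -1) -> (l c = 1 \/ l c = -1) -> False.
Proof.
  move=> ha hb hc hab hac hbc.
  have hba : mt b a = 0 by rewrite vmeetC.
  have hca : mt c a = 0 by rewrite vmeetC.
  have hcb : mt c b = 0 by rewrite vmeetC.
  case=> ea; case=> eb; case=> ec.
  all: first [ by solve_core (core a b c) | by solve_core (core a c b)
        | by solve_core (core b c a) ].
Qed.

Lemma no3 p q r : 0 <=: p -> 0 <=: q -> 0 <=: r ->
  mt p q = 0 -> mt p r = 0 -> mt q r = 0 ->
  l p != 0 -> l q != 0 -> l r != 0 -> False.
Proof.
move=> hp hq hr hpq hpr hqr np nq nr.
have hs : forall x : R, 0 <= `|x|^-1 by move=> x; rewrite invr_ge0.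
apply: (key3 (`|l p|^-1 *: p) (`|l q|^-1 *: q) (`|l r|^-1 *: r)).
- exact: lscale0.
- exact: lscale0.
- exact: lscale0.
- exact: disjZ.
- exact: disjZ.
- exact: disjZ.
- by rewrite (lfZ _ hlin); apply: sgn1.
- by rewrite (lfZ _ hlin); apply: sgn1.
- by rewrite (lfZ _ hlin); apply: sgn1.
Qed.

Lemma nd3_m (hob : order_bounded_functional L l) m : is_modulus L l m ->
  forall p q r, 0 <=: p -> 0 <=: q -> 0 <=: r ->
  mt p q = 0 -> mt p r = 0 -> mt q r = 0 ->
  0 < m p -> 0 < m q -> 0 < m r -> False.
Proof.
move=> hm.
have getw : forall p, 0 <=: p -> 0 < m p -> exists w, [/\ 0 <=: w, w <=: p & l w != 0].
  move=> p hp hmp; apply: NNPP => hn.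
  have : m p <= 0.
    apply: (@modulus_null _ _ L l hob m p hm hp) => w h0 h1.
    apply/eqP; apply: negbNE; apply/negP => hw; apply: hn; exists w; split=> //.
  by rewrite leNgt hmp.
have dsub : forall a b a' b', 0 <=: a' -> 0 <=: b' -> a' <=: a -> b' <=: b -> mt a b = 0 -> mt a' b' = 0.
  move=> a b a' b' ha hb h1 h2 h; apply: lanti; last exact: vmeet_ge0.
  by rewrite -h; apply: vmeet_mono.
move=> p q r hp hq hr hpq hpr hqr mp mq mr.
have [p' [hp0 hp1 np]] := getw p hp mp.
have [q' [hq0 hq1 nq]] := getw q hq mq.
have [r' [hr0 hr1 nr]] := getw r hr mr.
apply: (no3 p' q' r') => //; apply: dsub; eauto.
Qed.

End G.


Section Dec.
Context {R : realType} {X : lmodType R} (L : vector_lattice X).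
Local Notation "x <=: y" := (vle L x y) (at level 70).
Local Notation jn := (vjoin L).
Local Notation mt := (vmeet L).
Local Notation pp x := (jn x 0).
Local Notation nn x := (jn (- x) 0).

Variable f : X -> R.
Hypothesis hf : lin_functional f.
Hypothesis hpos : posf L f.
Hypothesis hnd3 : forall p q r, 0 <=: p -> 0 <=: q -> 0 <=: r ->
  mt p q = 0 -> mt p r = 0 -> mt q r = 0 ->
  0 < f p -> 0 < f q -> 0 < f r -> False.

Lemma fmono x y : x <=: y -> f x <= f y.
Proof. exact: posf_mono. Qed.

Lemma ex_bound (K : R) : exists N : nat, K < N%:R.
Proof.
have [hK|hK] := lerP 0 K; first by exists (Num.bound K); apply: archi_boundP.
by exists 0%N; apply: lt_le_trans hK _.
Qed.

Lemma dsub2 a b a' b' : 0 <=: a' -> 0 <=: b' -> a' <=: a -> b' <=: b -> mt a b = 0 -> mt a' b' = 0.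
Proof.
move=> ha hb h1 h2 h; apply: lanti; last exact: vmeet_ge0.
by rewrite -h; apply: vmeet_mono.
Qed.

Definition comp (e x : X) := sup (fun r => exists N : nat, r = f (mt x (N%:R *: e))).

Lemma mono_scal x e (s t : R) : 0 <=: e -> s <= t -> mt x (s *: e) <=: mt x (t *: e).
Proof. by move=> he hst; apply: vmeet_mono; [apply: lrefl|apply: lscale_le]. Qed.

Lemma comp_eq e x : 0 <=: e ->
  (exists N0 : nat, forall N, (N0 <= N)%N -> f (mt x (N%:R *: e)) = f (mt x (N0%:R *: e))) ->
  exists N0 : nat, forall N, (N0 <= N)%N -> comp e x = f (mt x (N%:R *: e)).
Proof.
move=> he [N0 hN0]; exists N0 => N hN; rewrite hN0 //.
apply/eqP; rewrite eq_le; apply/andP; split.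
  apply: sup_le_c; first by exists (f (mt x (N0%:R *: e))), N0.
  move=> r [M ->]; rewrite -(hN0 (maxn M N0)) ?leq_maxr //.
  by apply: fmono; apply: mono_scal => //; rewrite ler_nat leq_maxl.
apply: (@le_sup_c _ _ _ (f (mt x (N0%:R *: e)))); first by exists N0.
move=> r [M ->]; rewrite -(hN0 (maxn M N0)) ?leq_maxr //.
by apply: fmono; apply: mono_scal => //; rewrite ler_nat leq_maxl.
Qed.

Section Comp.
Variable e : X.
Hypothesis he : 0 <=: e.
Hypothesis EV : forall x, 0 <=: x ->
  exists N0 : nat, forall N, (N0 <= N)%N -> comp e x = f (mt x (N%:R *: e)).

Lemma comp_add x y : 0 <=: x -> 0 <=: y -> comp e (x + y) = comp e x + comp e y.
Proof.
move=> hx hy.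
have [N1 h1] := EV x hx; have [N2 h2] := EV y hy; have [N3 h3] := EV _ (ge0_add L x y hx hy).
set N := maxn N1 (maxn N2 N3).
have n1 : (N1 <= N)%N by rewrite leq_maxl.
have n2 : (N2 <= N)%N by rewrite /N !leq_max leqnn !orbT.
have n3 : (N3 <= N)%N by rewrite /N !leq_max leqnn !orbT.
have hNe : 0 <=: N%:R *: e by apply: lscale0.
apply/eqP; rewrite eq_le; apply/andP; split.
  rewrite (h3 N) // (h1 N) // (h2 N) // -(lfD _ hf); apply: fmono.
  by rewrite !(vmeetC L _ (N%:R *: e)); apply: meet_sub_le.
rewrite (h3 (N + N)%N) ?(leq_trans n3) ?leq_addr // (h1 N) // (h2 N) // -(lfD _ hf).
apply: fmono; apply: mgreat; first by apply: ladd; apply: ml.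
by rewrite natrD scalerDl; apply: ladd; apply: mr.
Qed.

Lemma comp_pos x : 0 <=: x -> 0 <= comp e x.
Proof.
move=> hx; have [N0 h] := EV _ hx; rewrite (h N0) //; apply: hpos.
by apply: vmeet_ge0 => //; apply: lscale0.
Qed.

Lemma comp_hom c x : 0 <= c -> 0 <=: x -> comp e (c *: x) = c * comp e x.
Proof.
move=> hc hx; have [->|c0] := eqVneq c 0.
  rewrite scale0r mul0r; have [N0 h] := EV _ (lrefl L 0); rewrite (h N0) //.
  by rewrite vmeet_l ?(lf0 _ hf) //; apply: lscale0.
have cp : 0 < c by rewrite lt_def c0 hc.
have hcx : 0 <=: c *: x by apply: lscale0.
have [N1 h1] := EV _ hcx; have [K h2] := EV _ hx.
have [B hB] := ex_bound (c * K%:R).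
set N := maxn N1 B.
set t := N%:R / c.
have hKt : K%:R <= t.
  rewrite /t ler_pdivlMr // mulrC; apply: le_trans (ltW hB) _.
  by rewrite ler_nat leq_maxr.
have [B' hB'] := ex_bound t.
set K' := maxn K B'.
have htK : t <= K'%:R by apply: le_trans (ltW hB') _; rewrite ler_nat leq_maxr.
have e1 : mt (c *: x) (N%:R *: e) = c *: mt x (t *: e).
  by rewrite vmeetZ // scalerA /t mulrC divfK.
rewrite (h1 N) ?leq_maxl // e1 (lfZ _ hf); congr (_ * _).
apply/eqP; rewrite eq_le; apply/andP; split.
  by rewrite (h2 K') ?leq_maxl //; apply: fmono; apply: mono_scal.
by rewrite (h2 K) //; apply: fmono; apply: mono_scal.
Qed.

Definition compx := ext L (comp e).

Lemma compx_lin : lin_functional compx.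
Proof. by apply: ext_lin; (try exact: comp_add); exact: comp_hom. Qed.

Lemma compx_pos x : 0 <=: x -> compx x = comp e x.
Proof. by move=> hx; apply: ext_pos => //; (try exact: comp_add); exact: comp_hom. Qed.

Lemma compx_riesz (o : X) : 0 <=: o -> mt e o = 0 -> 0 < f o -> riesz_hom L compx.
Proof.
move=> ho heo fo; apply: riesz_of; first exact: compx_lin.
  by move=> x hx; rewrite compx_pos //; apply: comp_pos.
move=> a b ha hb hab; rewrite !compx_pos //.
apply: NNPP => hn.
have [N1 h1] := EV _ ha; have [N2 h2] := EV _ hb.
set N := maxn N1 N2.
have hNe : 0 <=: N%:R *: e by apply: lscale0.
have pa : 0 < f (mt a (N%:R *: e)).
  rewrite -h1 ?leq_maxl // lt_def comp_pos // andbT; apply/eqP => h; apply: hn; by left.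
have pb : 0 < f (mt b (N%:R *: e)).
  rewrite -h2 ?leq_maxr // lt_def comp_pos // andbT; apply/eqP => h; apply: hn; by right.
have hNo : mt (N%:R *: e) o = 0.
  by rewrite -[o]scale1r; apply: disjZ.
apply: (hnd3 (mt a (N%:R *: e)) (mt b (N%:R *: e)) o) => //.
- by apply: vmeet_ge0.
- by apply: vmeet_ge0.
- apply: (dsub2 a b) => //; [apply: vmeet_ge0 => //|apply: vmeet_ge0 => //|apply: ml|apply: ml].
- by apply: (dsub2 (N%:R *: e) o) => //; [apply: vmeet_ge0 => //|apply: mr|apply: lrefl].
- by apply: (dsub2 (N%:R *: e) o) => //; [apply: vmeet_ge0 => //|apply: mr|apply: lrefl].
Qed.

End Comp.


Section Two.
Variables u v : X.
Hypotheses (hu : 0 <=: u) (hv : 0 <=: v) (huv : mt u v = 0) (fu : 0 < f u) (fv : 0 < f v).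

Lemma stab x : 0 <=: x -> exists N0 : nat, forall N, (N0 <= N)%N ->
  f x = f (mt x (N%:R *: u)) + f (mt x (N%:R *: v)).
Proof.
move=> hx; have hx0 : 0 <= f x by apply: hpos.
have d1 : 0 <= f x / f u by apply: divr_ge0 => //; apply: ltW.
have d2 : 0 <= f x / f v by apply: divr_ge0 => //; apply: ltW.
have [N0 hN0] := ex_bound (f x / f u + f x / f v).
exists N0 => N hN.
have hNR : N0%:R <= N%:R :> R by rewrite ler_nat.
have hN0' : 0 <= N%:R :> R by [].
set a := N%:R *: u; set b := N%:R *: v.
have ha : 0 <=: a by apply: lscale0.
have hb : 0 <=: b by apply: lscale0.
have hab : mt a b = 0 by apply: disjZ.
have fa : f x < f a.
  have h : f x / f u < N%:R by lra.
  by rewrite /a (lfZ _ hf); rewrite ltr_pdivrMr // in h.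
have fb : f x < f b.
  have h : f x / f v < N%:R by lra.
  by rewrite /b (lfZ _ hf); rewrite ltr_pdivrMr // in h.
set w := pp (x - (a + b)).
have fw : f w = 0.
  have hw0 : 0 <=: w by apply: pp_ge0.
  apply/eqP; rewrite eq_le (hpos _ hw0) andbT leNgt; apply/negP => hw.
  have sub1 : forall c, 0 <=: c -> pp (c - x) <=: c.
    move=> c hc; apply: jleast => //; apply: lsub0'.
    by rewrite opprB addrC subrK.
  have nnE' : forall c, pp (c - x) = nn (x - c) by move=> c; rewrite opprB.
  have pn0 : forall y, mt (nn y) (pp y) = 0 by move=> y; rewrite vmeetC meet_pn.
  have wle : forall c, 0 <=: c -> c <=: a + b -> w <=: pp (x - c).
    move=> c hc hcab; apply: vjoin_mono; last exact: lrefl.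
    by apply: ladd; [apply: lrefl|apply: lopp].
  have fpos : forall c, f x < f c -> 0 < f (pp (c - x)).
    move=> c hc; have := fmono _ _ (jl L (c - x) 0); rewrite (lfB _ hf) => h1.
    lra.
  apply: (hnd3 (pp (a - x)) (pp (b - x)) w); try exact: pp_ge0.
  - by apply: (dsub2 a b) => //; try exact: pp_ge0; apply: sub1.
  - apply: (dsub2 (nn (x - a)) (pp (x - a))); try exact: pp_ge0.
    + by rewrite nnE'; apply: lrefl.
    + apply: wle => //; by have := ladd L (lrefl L a) hb; rewrite addr0.
    + exact: pn0.
  - apply: (dsub2 (nn (x - b)) (pp (x - b))); try exact: pp_ge0.
    + by rewrite nnE'; apply: lrefl.
    + apply: wle => //; by have := ladd L ha (lrefl L b); rewrite add0r.
    + exact: pn0.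
  - exact: fpos.
  - exact: fpos.
  - exact: hw.
move: fw; rewrite /w pp_sub meet_disj_add // !(lfB _ hf) (lfD _ hf).
by lra.
Qed.

Lemma stab2 x : 0 <=: x -> exists N0 : nat, forall N, (N0 <= N)%N ->
  f (mt x (N%:R *: u)) = f (mt x (N0%:R *: u)) /\
  f (mt x (N%:R *: v)) = f (mt x (N0%:R *: v)).
Proof.
move=> hx; have [N0 h] := stab _ hx; exists N0 => N hN.
have e1 := h N hN; have e2 := h N0 (leqnn N0).
have m1 : f (mt x (N0%:R *: u)) <= f (mt x (N%:R *: u)).
  by apply: fmono; apply: mono_scal => //; rewrite ler_nat.
have m2 : f (mt x (N0%:R *: v)) <= f (mt x (N%:R *: v)).
  by apply: fmono; apply: mono_scal => //; rewrite ler_nat.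
split; lra.
Qed.

Lemma EVu x : 0 <=: x ->
  exists N0 : nat, forall N, (N0 <= N)%N -> comp u x = f (mt x (N%:R *: u)).
Proof.
move=> hx; apply: comp_eq => //; have [N0 h] := stab2 _ hx; exists N0 => N hN.
by case: (h N hN).
Qed.

Lemma EVv x : 0 <=: x ->
  exists N0 : nat, forall N, (N0 <= N)%N -> comp v x = f (mt x (N%:R *: v)).
Proof.
move=> hx; apply: comp_eq => //; have [N0 h] := stab2 _ hx; exists N0 => N hN.
by case: (h N hN).
Qed.

Lemma fsplit x : 0 <=: x -> f x = comp u x + comp v x.
Proof.
move=> hx; have [N0 h0] := stab _ hx; have [N1 h1] := EVu _ hx; have [N2 h2] := EVv _ hx.
set N := maxn N0 (maxn N1 N2).
have n0 : (N0 <= N)%N by rewrite /N !leq_max leqnn.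
have n1 : (N1 <= N)%N by rewrite /N !leq_max leqnn !orbT.
have n2 : (N2 <= N)%N by rewrite /N !leq_max leqnn !orbT.
by rewrite (h0 N n0) (h1 N n1) (h2 N n2).
Qed.
End Two.

Theorem decomp : exists phi psi : X -> R,
  [/\ riesz_hom L phi, riesz_hom L psi & forall x, f x = phi x + psi x].
Proof.
case: (classic (exists u v, [/\ 0 <=: u, 0 <=: v, mt u v = 0, 0 < f u & 0 < f v])).
  move=> [u [v [hu hv huv fu fv]]].
  exists (compx u), (compx v); split.
  - exact: (compx_riesz u hu (EVu _ _ hu hv huv fu fv) v hv huv fv).
  - apply: (compx_riesz v hv (EVv _ _ hu hv huv fu fv) u hu _ fu).
    by rewrite vmeetC.
  move=> x; rewrite /compx /ext.
  rewrite -{1}(pp_nn L x) (lfB _ hf).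
  rewrite (fsplit _ _ hu hv huv fu fv _ (pp_ge0 L x)) (fsplit _ _ hu hv huv fu fv _ (nn_ge0 L x)).
  by lra.
move=> hn; exists f, (fun _ => 0); split.
- apply: riesz_of => // a b ha hb hab.
  apply: NNPP => hn2; apply: hn; exists a, b; split => //.
  + rewrite lt_def hpos // andbT; apply/eqP => h; apply: hn2; by left.
  + rewrite lt_def hpos // andbT; apply/eqP => h; apply: hn2; by right.
- exact: riesz0.
- by move=> x; rewrite addr0.
Qed.
End Dec.


Definition Fm {R : realType} (s t : R) :=
  Num.max (Num.max s t) 0 + Num.min (Num.min s t) 0.

Lemma Fhom {R : realType} (c s t : R) : Fm (c * s) (c * t) = c * Fm s t.
Proof.
rewrite /Fm mulrDr; have [hc|hc] := lerP 0 c.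
  by rewrite !maxr_pMr // !minr_pMr // !mulr0.
by rewrite !maxr_nMr ?ltW // !minr_nMr ?ltW // !mulr0 addrC.
Qed.

Lemma Fcomb {R : realType} (a b s1 s2 t1 t2 : R) :
  a * s1 + b * s2 = 0 -> a * t1 + b * t2 = 0 -> a * Fm s1 t1 + b * Fm s2 t2 = 0.
Proof.
move=> h1 h2; have [b0|b0] := eqVneq b 0.
  subst b; rewrite !mul0r !addr0 in h1 h2 *.
  have [a0|a0] := eqVneq a 0; first by rewrite a0 mul0r.
  move/eqP: h1; rewrite mulf_eq0 (negbTE a0) /= => /eqP ->.
  move/eqP: h2; rewrite mulf_eq0 (negbTE a0) /= => /eqP ->.
  by rewrite /Fm !maxxx !minxx addr0 mulr0.
have e1 : s2 = (- a / b) * s1.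
  apply: (mulfI b0); rewrite [RHS]mulrA.
  have -> : b * (- a / b) = - a by rewrite mulrC divfK.
  nra.
have e2 : t2 = (- a / b) * t1.
  apply: (mulfI b0); rewrite [RHS]mulrA.
  have -> : b * (- a / b) = - a by rewrite mulrC divfK.
  nra.
rewrite e1 e2 Fhom mulrA.
have -> : b * (- a / b) = - a by rewrite mulrC divfK.
ring.
Qed.

Section Main.
Context {R : realType} {X : lmodType R} (L : vector_lattice X).
Local Notation "x <=: y" := (vle L x y) (at level 70).
Local Notation jn := (vjoin L).
Local Notation mt := (vmeet L).
Local Notation pp x := (jn x 0).
Local Notation nn x := (jn (- x) 0).

Lemma span1 (S : X -> Prop) (f g : X -> R) : lin_functional f -> lin_functional g ->
  (forall c x y, S x -> S y -> S (c *: x + y)) ->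
  (forall x, S x -> f x = 0 -> g x = 0) -> exists c, forall x, S x -> g x = c * f x.
Proof.
move=> hf hg hS h.
case: (classic (exists v, S v /\ f v <> 0)).
  move=> [v [Sv fv]]; exists (g v / f v) => x Sx.
  have Sy := hS (- (f x / f v)) v x Sv Sx.
  have := h _ Sy; rewrite hf hg => /(_ _) h'.
  have fv' : f v != 0 by apply/eqP.
  have : - (f x / f v) * f v + f x = 0 by rewrite mulNr divfK // addNr.
  move=> /h' e.
  transitivity (f x / f v * g v); last by ring.
  by apply/eqP; rewrite -subr_eq0; apply/eqP; rewrite -e; ring.
move=> hn; exists 0 => x Sx; rewrite mul0r; apply: h => //.
by apply: NNPP => hx; apply: hn; exists x.
Qed.

Variables (l : X -> R) (hl : order_bounded_functional L l) (m : X -> R) (hm : is_modulus L l m).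

Lemma rh_pos f : riesz_hom L f -> forall x, 0 <=: x -> 0 <= f x.
Proof.
case=> hf hj _ x hx; rewrite -(pp_id L x hx) hj (lf0 _ hf).
by rewrite le_max lexx orbT.
Qed.

Lemma dir1 : G_space L (kernel l) -> exists phi psi : X -> R,
  [/\ riesz_hom L phi, riesz_hom L psi & forall x, m x = phi x + psi x].
Proof.
move=> hG.
have hmp : posf L m.
  by move=> x hx; have := @modulus_ge _ _ L l m hm x hx; have := normr_ge0 (l x); lra.
have hmob : order_bounded_functional L m by case: hm.
have := decomp L m hmob.1 hmp (nd3_m L l hl.1 hG hl m hm).
done.
Qed.

Lemma dir2 : (exists phi psi : X -> R,
  [/\ riesz_hom L phi, riesz_hom L psi & forall x, m x = phi x + psi x]) ->
  G_space L (kernel l).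
Proof.
move=> [phi [psi [hphi hpsi hsum]]].
have hphi' := hphi; have hpsi' := hpsi.
case: hphi' => lphi jphi mphi; case: hpsi' => lpsi jpsi mpsi.
have hll := hl.1.
have kern : forall x, phi x = 0 -> psi x = 0 -> l x = 0.
  move=> x h1 h2.
  have z : forall y, phi y = 0 -> psi y = 0 -> l (pp y) = 0.
    move=> y e1 e2; have := @modulus_ge _ _ L l m hm _ (pp_ge0 L y).
    rewrite hsum jphi jpsi e1 e2 (lf0 _ lphi) (lf0 _ lpsi) maxxx addr0.
    by rewrite normr_le0 => /eqP.
  rewrite -(pp_nn L x) (lfB _ hll) z // z ?subrr //.
    by rewrite (lfN _ lphi) h1 oppr0.
  by rewrite (lfN _ lpsi) h2 oppr0.
have [b hb] : exists b, forall x, phi x = 0 -> l x = b * psi x.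
  apply: (span1 (fun x => phi x = 0)) => //.
  by move=> c x y e1 e2; rewrite lphi e1 e2 mulr0 addr0.
have [a ha] : exists a, forall x, True -> 1 * l x + (- b) * psi x = a * phi x.
  apply: (span1 (fun _ => True)) => //.
    exact: lin_comb.
  by move=> x _ e; rewrite (hb x e) mul1r mulNr subrr.
have hlx : forall x, l x = a * phi x + b * psi x.
  by move=> x; rewrite -(ha x I); ring.
split.
- exact: (lf0 _ hll).
- by move=> c x y hx hy; rewrite /kernel in hx hy *; rewrite hll hx hy mulr0 addr0.
move=> x y; rewrite /kernel => ex ey.
have Fphi : forall f, riesz_hom L f -> f (jn (jn x y) 0 + mt (mt x y) 0) = Fm (f x) (f y).
  by move=> f; case=> hf hj hm'; rewrite (lfD _ hf) hj hj hm' hm' (lf0 _ hf).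
rewrite hlx (Fphi _ hphi) (Fphi _ hpsi); apply: Fcomb.
  by rewrite -hlx.
by rewrite -hlx.
Qed.

End Main.

Theorem lemma4 (R : realType) (X : lmodType R) (L : vector_lattice X)
    (l : X -> R) (hl : order_bounded_functional L l)
    (m : X -> R) (hm : is_modulus L l m) :
  G_space L (kernel l) <->
  exists phi psi : X -> R,
    [/\ riesz_hom L phi, riesz_hom L psi & forall x, m x = phi x + psi x].
Proof.
split; [exact: (@dir1 _ _ L l hl m hm) | exact: (@dir2 _ _ L l hl m hm)].
Qed.
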